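(* Let $Q_1,Q_2\in\mathbb{R}^{(m+n)\times(m+n)}$ be permutation matrices with $Q_1Q_2^{\mathsf T}=\begin{bmatrix}Q_{11}&Q_{12}\\Q_{21}&Q_{22}\end{bmatrix}$ ($Q_{11}\in\mathbb{R}^{m\times m}$, $Q_{22}\in\mathbb{R}^{n\times n}$). For $X\in\mathbb{C}^{n\times m}$, $Y\in\mathbb{C}^{m\times n}$ set $$W=Q_{22}-XQ_{12}+(Q_{21}-XQ_{11})Y\in\mathbb{C}^{n\times n},\qquad \widetilde W=Q_{11}^{\mathsf T}-YQ_{12}^{\mathsf T}+(Q_{21}^{\mathsf T}-YQ_{22}^{\mathsf T})X\in\mathbb{C}^{m\times m}.$$ Then $W$ is nonsingular if and only if $\widetilde W$ is nonsingular. Moreover, when they are nonsingular, for any $E\in\mathbb{C}^{m\times m}$, $F\in\mathbb{C}^{n\times n}$ the two formulas $$E_+=E\big[Q_{11}+(Q_{11}Y+Q_{12})W^{-1}(XQ_{11}-Q_{21})\big]E,\ \ F_+=FW^{-1}F,\ \ X_+=X+FW^{-1}(XQ_{11}-Q_{21})E,\ \ Y_+=Y+E(Q_{11}Y+Q_{12})W^{-1}F$$ and $$E_+=E\widetilde W^{-1}E,\ \ F_+=F\big[Q_{22}^{\mathsf T}+(Q_{22}^{\mathsf T}X+Q_{12}^{\mathsf T})\widetilde W^{-1}(YQ_{22}^{\mathsf T}-Q_{21}^{\mathsf T})\big]F,\ \ X_+=X+F(Q_{22}^{\mathsf T}X+Q_{12}^{\mathsf T})\widetilde W^{-1}E,\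 \ Y_+=Y+E\widetilde W^{-1}(YQ_{22}^{\mathsf T}-Q_{21}^{\mathsf T})F$$ produce the same quadruple $(E_+,F_+,X_+,Y_+)$. *)

(* Defs.v *)
From HB Require Import structures.
From mathcomp Require Import all_boot all_order all_algebra.
From mathcomp Require Import reals complex.
Set Implicit Arguments. Unset Strict Implicit. Unset Printing Implicit Defensive.
Import Order.TTheory GRing.Theory Num.Theory.
Local Open Scope ring_scope.

Definition cmx (R : realType) (p q : nat) (A : 'M[R]_(p, q)) : 'M[R[i]]_(p, q) :=
  map_mx (fun x : R => (x%:C)%C) A.

(* Main.v *)
Require Import Defs.
From HB Require Import structures.
From mathcomp Require Import all_boot all_order all_algebra.
From mathcomp Require Import fingroup perm.
From mathcomp Require Import reals complex.
Import Order.TTheory GRing.Theory Num.Theory.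
Local Open Scope ring_scope.
Unset Implicit Arguments.

Lemma blocks (K : fieldType) (m n : nat) (Q : 'M[K]_(m + n))
  (X : 'M[K]_(n, m)) (Y : 'M[K]_(m, n)) :
  Q^T *m Q = 1%:M -> Q *m Q^T = 1%:M ->
  let Q11 := ulsubmx Q in let Q12 := ursubmx Q in
  let Q21 := dlsubmx Q in let Q22 := drsubmx Q in
  let W : 'M[K]_n := Q22 - X *m Q12 + (Q21 - X *m Q11) *m Y in
  let Wt : 'M[K]_m := Q11^T - Y *m Q12^T + (Q21^T - Y *m Q22^T) *m X in
  let A := Q11 in let B := Q11 *m Y + Q12 in let C := Q21 - X *m Q11 in
  let A' := Wt in let B' := Q21^T - Y *m Q22^T in let C' := Q12^T + Q22^T *m X in
  let D' := Q22^T in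
  block_mx A' B' C' D' *m block_mx A B C W = 1%:M /\
  block_mx A B C W *m block_mx A' B' C' D' = 1%:M.
Proof.
move=> QtQ QQt Q11 Q12 Q21 Q22 W Wt A B C A' B' C' D'.
pose L := block_mx 1%:M 0 (-X) 1%:M : 'M[K]_(m+n).
pose Li := block_mx 1%:M 0 X 1%:M : 'M[K]_(m+n).
pose U := block_mx 1%:M Y 0 1%:M : 'M[K]_(m+n).
pose Ui := block_mx 1%:M (-Y) 0 1%:M : 'M[K]_(m+n).
have LLi : L *m Li = 1%:M.
  by rewrite /L /Li mulmx_block ?mul1mx ?mul0mx ?mulmx1 ?mulmx0 ?addr0 ?add0r ?addNr ?addrN scalar_mx_block.
have LiL : Li *m L = 1%:M.
  by rewrite /L /Li mulmx_block ?mul1mx ?mul0mx ?mulmx1 ?mulmx0 ?addr0 ?add0r ?addNr ?addrN scalar_mx_block.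
have UUi : U *m Ui = 1%:M.
  by rewrite /U /Ui mulmx_block ?mul1mx ?mul0mx ?mulmx1 ?mulmx0 ?addr0 ?add0r ?addNr ?addrN scalar_mx_block.
have UiU : Ui *m U = 1%:M.
  by rewrite /U /Ui mulmx_block ?mul1mx ?mul0mx ?mulmx1 ?mulmx0 ?addr0 ?add0r ?addNr ?addrN scalar_mx_block.
have EM : block_mx A B C W = L *m Q *m U.
  rewrite -[Q in RHS]submxK /L /U !mulmx_block.
  rewrite ?mul1mx ?mul0mx ?mulmx1 ?mulmx0 ?addr0 ?add0r.
  by rewrite !mulNmx (addrC (- (X *m ulsubmx Q))) (addrC (- (X *m ursubmx Q))) (addrC ((dlsubmx Q - _) *m Y)).
have EM' : block_mx A' B' C' D' = Ui *m Q^T *m Li.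
  rewrite -[Q in RHS]submxK tr_block_mx /Li /Ui !mulmx_block.
  rewrite ?mul1mx ?mul0mx ?mulmx1 ?mulmx0 ?addr0 ?add0r.
  by rewrite !mulNmx.
rewrite EM EM'; split.
  by rewrite !mulmxA -(mulmxA _ Li) LiL mulmx1 -(mulmxA _ Q^T) QtQ mulmx1 UiU.
by rewrite !mulmxA -(mulmxA _ U) UUi mulmx1 -(mulmxA _ Q) QQt mulmx1 LLi.
Qed.

Lemma invmx_uniq (K : fieldType) k (M N : 'M[K]_k) : M *m N = 1%:M -> invmx M = N.
Proof.
move=> h; have [uM _] := mulmx1_unit h.
by rewrite -[RHS]mul1mx -(mulVmx uM) -mulmxA h mulmx1.
Qed.

Lemma alg (K : fieldType) m n (A A' : 'M[K]_m) (B B' : 'M[K]_(m, n))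
  (C C' : 'M[K]_(n, m)) (D D' : 'M[K]_n) :
  A' *m A + B' *m C = 1%:M -> A' *m B + B' *m D = 0 ->
  C' *m B + D' *m D = 1%:M -> C *m A' + D *m C' = 0 ->
  (D \in unitmx <-> A' \in unitmx) /\
  (D \in unitmx -> [/\ invmx A' = A - B *m invmx D *m C,
     invmx D = D' - C' *m invmx A' *m B',
     invmx D *m C = - (C' *m invmx A')
   & B *m invmx D = - (invmx A' *m B')]).
Proof.
move=> h1 h2 h3 h4.
have e2 : A' *m B = - (B' *m D) by apply/eqP; rewrite -addr_eq0 h2.
have e2' : B' *m D = - (A' *m B) by rewrite e2 opprK.
have e4 : D *m C' = - (C *m A') by apply/eqP; rewrite -addr_eq0 addrC h4.
have iA : D \in unitmx -> A' *m (A - B *m invmx D *m C) = 1%:M.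
  move=> uD; rewrite mulmxBr !mulmxA e2 !mulNmx -(mulmxA B') (mulmxV uD) mulmx1.
  by rewrite opprK.
have iD : A' \in unitmx -> (D' - C' *m invmx A' *m B') *m D = 1%:M.
  move=> uA; rewrite mulmxBl -!mulmxA e2' !mulmxN !mulmxA (mulmxKV uA).
  by rewrite opprK addrC.
have uDA : D \in unitmx <-> A' \in unitmx.
  split=> u; [by case: (mulmx1_unit (iA u)) | by case: (mulmx1_unit (iD u))].
split=> // uD; have uA : A' \in unitmx by apply/uDA.
have EA := @invmx_uniq _ _ _ _ (iA uD).
have ED : invmx D = D' - C' *m invmx A' *m B'.
  by apply: invmx_uniq; apply: mulmx1C; apply: iD.
split=> //.
  rewrite -mulNmx; apply: (canRL (mulmxK uA)); rewrite -mulmxA.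
  apply: (canLR (mulKmx uD)).
  by rewrite mulmxN e4 opprK.
rewrite -mulmxN; apply: (canRL (mulKmx uA)); rewrite mulmxA.
apply: (canLR (mulmxK uD)).
by rewrite mulNmx e2.
Qed.

Lemma perm_orth (R : realType) k (Q1 Q2 : 'M[R]_k) :
  is_perm_mx Q1 -> is_perm_mx Q2 ->
  let Q : 'M[R[i]]_k := cmx (Q1 *m Q2^T) in
  Q^T *m Q = 1%:M /\ Q *m Q^T = 1%:M.
Proof.
move=> /is_perm_mxP [s1 ->] /is_perm_mxP [s2 ->] Q.
rewrite /Q /cmx map_trmx -!map_mxM !tr_perm_mx -!perm_mxM.
rewrite !tr_perm_mx -!perm_mxM (mulVg (s1 / s2)%g) (mulgV (s1 / s2)%g) perm_mx1 map_mx1.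
by []. Qed.

Theorem mainTheorem3 (R : realType) (m n : nat) (Q1 Q2 : 'M[R]_(m + n))
  (hQ1 : is_perm_mx Q1) (hQ2 : is_perm_mx Q2)
  (X : 'M[R[i]]_(n, m)) (Y : 'M[R[i]]_(m, n)) :
  let Q : 'M[R[i]]_(m + n, m + n) := cmx (Q1 *m Q2^T) in
  let Q11 := ulsubmx Q in let Q12 := ursubmx Q in
  let Q21 := dlsubmx Q in let Q22 := drsubmx Q in
  let W : 'M[R[i]]_n := Q22 - X *m Q12 + (Q21 - X *m Q11) *m Y in
  let Wt : 'M[R[i]]_m := Q11^T - Y *m Q12^T + (Q21^T - Y *m Q22^T) *m X in
  (W \in unitmx <-> Wt \in unitmx) /\
  (W \in unitmx -> forall (E : 'M[R[i]]_m) (F : 'M[R[i]]_n),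
     [/\ E *m (Q11 + (Q11 *m Y + Q12) *m invmx W *m (X *m Q11 - Q21)) *m E
           = E *m invmx Wt *m E,
         F *m invmx W *m F
           = F *m (Q22^T + (Q22^T *m X + Q12^T) *m invmx Wt *m (Y *m Q22^T - Q21^T)) *m F,
         X + F *m invmx W *m (X *m Q11 - Q21) *m E
           = X + F *m (Q22^T *m X + Q12^T) *m invmx Wt *m E
       & Y + E *m (Q11 *m Y + Q12) *m invmx W *m F
           = Y + E *m invmx Wt *m (Y *m Q22^T - Q21^T) *m F]).
Proof.
move=> Q Q11 Q12 Q21 Q22 W Wt.
have [QtQ QQt] := @perm_orth _ _ _ _ hQ1 hQ2.
have [h1 h2] := @blocks _ _ _ _ X Y QtQ QQt.
move: h1 h2; rewrite !mulmx_block (scalar_mx_block m n) => h1 h2.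
have [e1 e2 _ e3] := eq_block_mx h1.
have [_ _ e4 _] := eq_block_mx h2.
have [uWWt H] := @alg _ _ _ _ _ _ _ _ _ _ _ e1 e2 e3 e4.
split=> // uW E F.
have [EA ED E3 E4] := H uW.
rewrite -/W -/Wt in EA ED E3 E4.
split.
- by rewrite EA -(opprB Q21) mulmxN.
- by rewrite ED -(opprB (Q21^T)) mulmxN (addrC (Q22^T *m X)).
- by rewrite -(opprB Q21) -(mulmxA F (invmx W)) mulmxN E3 opprK (addrC (Q22^T *m X)) !mulmxA.
- by rewrite -(opprB (Q21^T)) -(mulmxA E) E4 !mulmxN !mulmxA !mulNmx.
Qed.
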